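(* Let $G$ be a countable vertex set and let $c,b$ be conductance functions on $G$ with $b_{xy}\le c_{xy}$ for all $x,y$, such that $(G,c)$ and $(G,b)$ are connected locally finite networks. Let $\mathcal I:\mathcal H_{\mathcal E_c}\to\mathcal H_{\mathcal E_b}$ be the inclusion map and $\mathcal I^*:\mathcal H_{\mathcal E_b}\to\mathcal H_{\mathcal E_c}$ its Hilbert-space adjoint. Then $\mathcal I(\mathrm{Fin}_c)\subseteq \mathrm{Fin}_b$ and $\mathcal I^*(\mathrm{Harm}_b)\subseteq \mathrm{Harm}_c$.
   Context: A conductance function on a countable set $G$ is a symmetric map $c:G\times G\to[0,\infty)$ with $c_{xx}=0$; $x\sim y$ iff $c_{xy}>0$; locally finite means finitely many neighbours per vertex; connected means any two vertices are joined by a finite path of adjacent vertices. The energy is $\mathcal E_c(u,v)=\frac12\sum_{x,y}c_{xy}\overline{(u(x)-u(y))}(v(x)-v(y))$, and $\mathcal H_{\mathcal E_c}$ is the space of functions $u:G\to\mathbb C$ with $\mathcal E_c(u)<\infty$ modulo constants, with inner product $\mathcal E_c(u,v)$ (a Hilbert space). The Laplacian is $(\Delta_c v)(x)=\sum_{y\sim x}c_{xy}(v(x)-v(y))$. $\delta_x$ denotes the indicator of $\{x\}$ (an element of $\mathcal H_{\mathcal E_c}$), $\mathrm{Fin}_c$ is the closure in $\mathcal H_{\mathcal E_c}$ of $\mathrm{span}\{\delta_x\}_{x\in G}$, and $\mathrm{Harm}_c=\{v\in\mathcal H_{\mathcal E_c}:\Delta_c v(x)=0\ \forall x\in G\}$.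 Analogous notation with $b$ in place of $c$. *)

(* Defs.v *)
From HB Require Import structures.
From mathcomp Require Import all_boot all_order all_algebra.
From mathcomp Require Import all_classical all_reals.
From mathcomp Require Import ereal esum.
From mathcomp Require Import complex.

Set Implicit Arguments.
Unset Strict Implicit.
Unset Printing Implicit Defensive.
Import Order.TTheory GRing.Theory Num.Theory.
Local Open Scope classical_set_scope.
Local Open Scope ring_scope.
Local Open Scope complex_scope.

Section Networks.
Variables (R : realType) (G : countType).

Definition conductance (c : G -> G -> R) : Prop :=
  [/\ forall x y, c x y = c y x, forall x y, 0 <= c x y & forall x, c x x = 0].

Definition adj (c : G -> G -> R) : rel G := fun x y => 0 < c x y.

Definition locally_finite (c : G -> G -> R) : Prop :=
  forall x, finite_set [set y | adj c x y].

Definition connected_net (c : G -> G -> R) : Prop :=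
  forall x y, exists s : seq G, path (adj c) x s /\ last x s = y.

Definition normsq (z : R[i]) : R := complex.Re z ^+ 2 + complex.Im z ^+ 2.

Definition energy (c : G -> G -> R) (u : G -> R[i]) : \bar R :=
  ((2^-1)%:E * \esum_(p in [set: G * G]) (c p.1 p.2 * normsq (u p.1 - u p.2))%:E)%E.

Definition finite_energy (c : G -> G -> R) (u : G -> R[i]) : Prop :=
  (energy c u < +oo)%E.

Definition rsum (T : choiceType) (D : set T) (g : T -> R) : R :=
  fine (\esum_(t in D) (Num.max (g t) 0)%:E)
  - fine (\esum_(t in D) (Num.max (- g t) 0)%:E).

Definition csum (T : choiceType) (D : set T) (f : T -> R[i]) : R[i] :=
  Complex (rsum D (fun t => complex.Re (f t))) (rsum D (fun t => complex.Im (f t))).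

Definition energy_form (c : G -> G -> R) (u v : G -> R[i]) : R[i] :=
  (2^-1)%:C * csum [set: G * G]
    (fun p => (c p.1 p.2)%:C * (conjc (u p.1 - u p.2) * (v p.1 - v p.2))).

Definition dirac_fn (x : G) : G -> R[i] := fun y => if y == x then 1 else 0.

Definition in_span_dirac (v : G -> R[i]) : Prop :=
  exists (s : seq G) (a : G -> R[i]),
    v = fun y => \sum_(x <- s) a x * dirac_fn x y.

(** Fin_c: closure in H_{E_c} of span{delta_x}.  Elements of H_{E_c} are
    represented by finite-energy functions (energy is invariant under adding
    constants, so the closure condition does not depend on the representative). *)
Definition in_Fin (c : G -> G -> R) (u : G -> R[i]) : Prop :=
  finite_energy c u /\
  forall eps : R, 0 < eps ->
    exists v, in_span_dirac v /\ (energy c (fun y => (u y - v y)%R) < eps%:E)%E.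

Definition laplacian (c : G -> G -> R) (v : G -> R[i]) (x : G) : R[i] :=
  \sum_(y \in [set y | adj c x y]) ((c x y)%:C * (v x - v y)).

Definition in_Harm (c : G -> G -> R) (v : G -> R[i]) : Prop :=
  finite_energy c v /\ forall x, laplacian c v x = 0.

(** w represents I^* v, where I : H_{E_c} -> H_{E_b} is the inclusion:
    w in H_{E_c} and E_c(w, u) = E_b(v, I u) for all u in H_{E_c}. *)
Definition is_adjoint_incl_image (c b : G -> G -> R) (v w : G -> R[i]) : Prop :=
  finite_energy c w /\
  forall u, finite_energy c u -> energy_form c w u = energy_form b v u.

End Networks.

(* Main.v *)
Require Import Defs.
From HB Require Import structures.
From mathcomp Require Import all_boot all_order all_algebra.
From mathcomp Require Import all_classical all_reals.
From mathcomp Require Import ereal esum.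
From mathcomp Require Import complex.
From mathcomp Require Import finmap.
Import Order.TTheory GRing.Theory Num.Theory.
Local Open Scope classical_set_scope.
Local Open Scope ring_scope.
Local Open Scope complex_scope.

Section H.
Variable R : realType.

Lemma esumT_seq (T : choiceType) (g : T -> R) (r : seq T) : uniq r ->
  (forall t, 0 <= g t) -> (forall t, t \notin r -> g t = 0) ->
  (\esum_(t in [set: T]) (g t)%:E = (\sum_(t <- r) g t)%:E)%E.
Proof.
move=> ur g0 gr.
rewrite (_ : (\esum_(t in [set: T]) (g t)%:E)%E =
   (\esum_(t in [set: T]) (if t \in [set` r] then (g t)%:E else 0))%E); last first.
  apply: eq_esum => t _; case: ifPn => // /negP; rewrite mem_setE => /negP /gr ->//.
rewrite -esum_mkcond esum_fset//; last by move=> t _; rewrite lee_fin.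
by rewrite -fsbig_seq// sumEFin.
Qed.

Lemma rsumT_seq (T : choiceType) (g : T -> R) (r : seq T) : uniq r ->
  (forall t, t \notin r -> g t = 0) ->
  rsum [set: T] g = \sum_(t <- r) g t.
Proof.
move=> ur gr; rewrite /rsum !(@esumT_seq _ _ r)//;
  try by move=> t; rewrite le_max lexx orbT.
all: try by move=> t /gr ->; rewrite ?oppr0 maxxx.
rewrite /= -sumrB; apply: eq_bigr => t _.
case: (leP 0 (g t)) => h.
  by rewrite (max_idPr _) ?subr0 // oppr_le0.
by rewrite (max_idPl _) ?sub0r ?opprK // oppr_ge0 ltW.
Qed.

Lemma csumT_seq (T : choiceType) (f : T -> R[i]) (r : seq T) : uniq r ->
  (forall t, t \notin r -> f t = 0) ->
  csum [set: T] f = \sum_(t <- r) f t.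
Proof.
move=> ur fr; rewrite /csum !(@rsumT_seq _ _ r)//; last 2 first.
- by move=> t /fr ->.
- by move=> t /fr ->.
elim: r {ur fr} => [|t r IH]; first by rewrite !big_nil.
rewrite !big_cons -IH; by case: (f t).
Qed.

Lemma conjcD' (a b : R[i]) : conjc (a + b) = conjc a + conjc b.
Proof. by case: a => a1 a2; case: b => b1 b2; rewrite /= opprD. Qed.
Lemma conjcMr (k : R) (z : R[i]) : conjc (k%:C * z) = k%:C * conjc z.
Proof. by case: z => a b; apply/eqP; rewrite eq_complex /= !mul0r !addr0 !subr0 mulrN !eqxx. Qed.
Lemma conjc_sum (T : Type) (r : seq T) (F : T -> R[i]) :
  conjc (\sum_(t <- r) F t) = \sum_(t <- r) conjc (F t).
Proof.
elim: r => [|t r IH]; first by rewrite !big_nil /= oppr0.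
by rewrite !big_cons conjcD' IH.
Qed.

Section Dirac.
Variable G : countType.

Definition pairs (x : G) (s : seq G) : seq (G * G) :=
  [seq (x, y) | y <- s] ++ [seq (y, x) | y <- s].

Lemma pairs_uniq x s : uniq s -> x \notin s -> uniq (pairs x s).
Proof.
move=> us xs; rewrite /pairs cat_uniq !map_inj_uniq ?us //=; last 2 first.
- by move=> a b [].
- by move=> a b [].
rewrite andbT; apply/hasPn => p /mapP [y ys ->]; apply/negP => /mapP [z zs [e1 e2]].
by move: xs; rewrite -e1 ys.
Qed.

Lemma pairs_out (V : nmodType) (d : G -> G -> R) x s (F : G -> G -> V) :
  (forall y, y \notin s -> d x y = 0) -> (forall y z, d y z = d z y) ->
  (forall a b, d a b = 0 -> F a b = 0) ->
  (forall a b, dirac_fn R x a - dirac_fn R x b = 0 -> F a b = 0) ->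
  forall p, p \notin pairs x s -> F p.1 p.2 = 0.
Proof.
move=> ds dsym Fd Fdir [a b]; rewrite /pairs mem_cat negb_or => /andP[h1 h2] /=.
have [eax|ax] := eqVneq a x; have [ebx|bx] := eqVneq b x.
- by apply: Fdir; rewrite eax ebx subrr.
- apply: Fd; rewrite eax; apply: ds; apply: contra h1 => bs.
  by apply/mapP; exists b => //; rewrite eax.
- apply: Fd; rewrite ebx dsym; apply: ds; apply: contra h2 => as_.
  by apply/mapP; exists a => //; rewrite ebx.
- by apply: Fdir; rewrite /dirac_fn (negbTE ax) (negbTE bx) subrr.
Qed.

Lemma form_dirac (d : G -> G -> R) (u : G -> R[i]) x (s : seq G) :
  uniq s -> x \notin s -> (forall y, y \notin s -> d x y = 0) ->
  (forall y z, d y z = d z y) ->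
  energy_form d u (dirac_fn R x) =
    conjc (\sum_(y <- s) (d x y)%:C * (u x - u y)).
Proof.
move=> us xs ds dsym.
rewrite /energy_form (@csumT_seq _ _ (pairs x s)); last 2 first.
- exact: pairs_uniq.
- apply: (@pairs_out _ d x s (fun a b => (d a b)%:C * (conjc (u a - u b) *
     (dirac_fn R x a - dirac_fn R x b)))) => //.
  + by move=> a b ->; rewrite mul0r.
  + by move=> a b ->; rewrite !mulr0.
rewrite /pairs big_cat !big_map /=.
have dxx : dirac_fn R x x = 1 by rewrite /dirac_fn eqxx.
have dj : forall j, j \in s -> dirac_fn R x j = 0.
  by move=> j js; rewrite /dirac_fn; case: eqP => // ejx; move: xs; rewrite -ejx js.
rewrite dxx.
set S := \sum_(y <- s) (d x y)%:C * conjc (u x - u y).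
have -> : \sum_(j <- s) (d x j)%:C * (conjc (u x - u j) * (1 - dirac_fn R x j)) = S.
  apply: eq_big_seq => j js; rewrite (dj j js). by rewrite subr0 mulr1.
rewrite [X in S + X](_ : _ = S); last first.
  apply: eq_big_seq => j js; rewrite (dj j js). rewrite sub0r dsym -[u j - u x]opprB rmorphN.
  by rewrite mulrN1 opprK.
rewrite conjc_sum /S; under [RHS]eq_bigr do rewrite conjcMr.
set T := \sum_(i <- s) _.
have h2 : (2^-1 : R)%:C * 2 = 1.
  by rewrite -(rmorph_nat (real_complex R) 2) -rmorphM mulVf // pnatr_eq0.
by rewrite -mulr2n -(mulr_natr T 2) mulrCA h2 mulr1.
Qed.

Lemma energy_dirac_fin (d : G -> G -> R) x (s : seq G) :
  uniq s -> x \notin s -> (forall y, y \notin s -> d x y = 0) ->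
  (forall y z, d y z = d z y) -> (forall y z, 0 <= d y z) ->
  finite_energy d (dirac_fn R x).
Proof.
move=> us xs ds dsym d0.
rewrite /finite_energy /energy (@esumT_seq _ _ (pairs x s)).
- by rewrite -EFinM ltry.
- exact: pairs_uniq.
- by move=> p; rewrite mulr_ge0 // /normsq addr_ge0 // sqr_ge0.
- apply: (@pairs_out _ d x s (fun a b => d a b *
     normsq (dirac_fn R x a - dirac_fn R x b))) => //.
  + by move=> a b ->; rewrite mul0r.
  + by move=> a b ->; rewrite /normsq /= expr0n /= addr0 mulr0.
Qed.

Lemma lap_seq (d : G -> G -> R) (v : G -> R[i]) x (s : seq G) :
  uniq s -> (forall y, adj d x y -> y \in s) -> (forall y, 0 <= d x y) ->
  laplacian d v x = \sum_(y <- s) (d x y)%:C * (v x - v y).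
Proof.
move=> us hsub d0; rewrite /laplacian (fsbig_fwiden s) //.
- move=> y [/= ys nadj]; rewrite /preimage /=.
  have -> : d x y = 0.
    apply/eqP; rewrite eq_le d0 andbT leNgt; apply/negP => h; apply: nadj.
    exact: h.
  by rewrite mul0r.
Qed.

Lemma energy_le (c b : G -> G -> R) (f : G -> R[i]) :
  (forall x y, 0 <= b x y) -> (forall x y, b x y <= c x y) ->
  (energy b f <= energy c f)%E.
Proof.
move=> b0 bc; rewrite /energy; apply: lee_wpmul2l; first by rewrite lee_fin invr_ge0.
apply: le_esum => p _; rewrite lee_fin ler_wpM2r //.
by rewrite /normsq addr_ge0 // sqr_ge0.
Qed.
End Dirac.
End H.

Theorem lemma3p4 (R : realType) (G : countType) (c b : G -> G -> R) :
  conductance c -> conductance b ->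
  (forall x y, b x y <= c x y) ->
  connected_net c -> locally_finite c ->
  connected_net b -> locally_finite b ->
  (forall u : G -> R[i], in_Fin c u -> in_Fin b u) /\
  (forall v w : G -> R[i], in_Harm b v -> is_adjoint_incl_image c b v w ->
     in_Harm c w).
Proof.
move=> [csym c0 cxx] [bsym b0 bxx] bc _ lfc _ _.
have ele := fun f => @energy_le R G c b f b0 bc.
split.
  move=> u [fu appr]; split; first exact: le_lt_trans (ele u) fu.
  move=> eps eps0; have [v [sv ev]] := appr eps eps0.
  by exists v; split => //; exact: le_lt_trans (ele _) ev.
move=> v w [fv hv] [fw adjw]; split => // x.
set s : seq G := finmap.enum_fset (fset_set [set y | adj c x y]).
have us : uniq s by exact: finmap.fset_uniq.
have memN : forall y, (y \in s) = adj c x y.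
  move=> y; rewrite /s.
  have := in_fset_set (lfc x) y => e.
  change ((y \in fset_set [set y0 | adj c x y0]) = adj c x y); rewrite e; apply/idP/idP => [/set_mem //|h]; exact: mem_set.
have xs : x \notin s by rewrite memN /adj cxx ltxx.
have cs : forall y, y \notin s -> c x y = 0.
  move=> y; rewrite memN /adj => h; apply/eqP; rewrite eq_le c0 andbT leNgt.
  exact: h.
have bs : forall y, y \notin s -> b x y = 0.
  move=> y /cs h; apply/eqP; rewrite eq_le b0 andbT -h; exact: bc.
have fd := energy_dirac_fin R G c x s us xs cs csym c0.
have e1 := adjw _ fd.
rewrite (form_dirac R G c w x s us xs cs csym) (form_dirac R G b v x s us xs bs bsym) in e1.
rewrite -(lap_seq R G c w x s us) in e1; last 2 first.
- by move=> y; rewrite memN.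
- by [].
rewrite -(lap_seq R G b v x s us) in e1; last 2 first.
- move=> y; rewrite memN /adj => h; exact: lt_le_trans h (bc _ _).
- by [].
rewrite (hv x) in e1.
by rewrite -[laplacian c w x]conjcK e1 conjcK.
Qed.
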